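(* Let $F:X\rightrightarrows Y$ be upper $K$-convex, let $\bar x\in X$, and suppose $F(\bar x)$ is $K$-sequentially compact and $D_Y$ is $K$-closed. Then $$\widehat\partial F(\bar x)=\{T\in B(X,Y)\mid F(x)\subset F(\bar x)+T(x-\bar x)+K \ \text{ for all } x\in X\}.$$
   Context: $X,Y$ are real normed spaces; $B(X,Y)$ is the space of bounded linear operators $X\to Y$; $B(x,\delta)$ is the open ball and $D_Y$ the closed unit ball of $Y$. $K\subset Y$ is a pointed closed convex cone. All set-valued maps have nonempty values. For $F:X\rightrightarrows Y$ and $\bar x\in X$, the Fréchet subdifferential $\widehat\partial F(\bar x)$ is the set of all $T\in B(X,Y)$ such that for every $\varepsilon>0$ there is $\delta>0$ with $F(x)+K\subset F(\bar x)+K+T(x-\bar x)+\varepsilon\|x-\bar x\|D_Y$ for all $x\in B(\bar x,\delta)$. $F:X\rightrightarrows Y$ is upper $K$-convex if $\lambda F(x)+(1-\lambda)F(y)\subset F(\lambda x+(1-\lambda)y)+K$ for all $x,y\in X$, $\lambda\in(0,1)$. A nonempty set $A\subset Y$ is $K$-sequentially compact if for every sequence $(a_n)\subset A$ there is a sequence $(c_n)\subset K$ such that $(a_n-c_n)$ has a subsequence converging to an element of $A$. A set $A$ is $K$-closed if $A+K$ is closed. *)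

(* Defs.v *)
From HB Require Import structures.
From mathcomp Require Import all_boot all_order all_algebra.
From mathcomp Require Import all_classical all_reals all_analysis.
Set Implicit Arguments. Unset Strict Implicit. Unset Printing Implicit Defensive.
Import Order.TTheory GRing.Theory Num.Theory.
Import numFieldNormedType.Exports.
Local Open Scope classical_set_scope.
Local Open Scope ring_scope.

Definition mink_sum (R : numDomainType) (V : lmodType R) (A B : set V) : set V :=
  [set a + b | a in A & b in B].

Definition set_transl (R : numDomainType) (V : lmodType R) (A : set V) (v : V) : set V :=
  [set a + v | a in A].

Definition set_scale (R : numDomainType) (V : lmodType R) (l : R) (A : set V) : set V :=
  [set l *: a | a in A].

Definition cball1 (R : numDomainType) (V : normedModType R) : set V :=
  [set y | `|y| <= 1].

Definition pointed_closed_convex_cone (R : realType) (Y : normedModType R)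
    (K : set Y) : Prop :=
  [/\ K 0,
      (forall l k, 0 <= l -> K k -> K (l *: k)),
      (forall k1 k2, K k1 -> K k2 -> K (k1 + k2)),
      (forall k, K k -> K (- k) -> k = 0) &
      closed K].

Definition upper_K_convex (R : realType) (X Y : normedModType R)
    (K : set Y) (F : X -> set Y) : Prop :=
  forall x y (l : R), 0 < l -> l < 1 ->
    mink_sum (set_scale l (F x)) (set_scale (1 - l) (F y))
      `<=` mink_sum (F (l *: x + (1 - l) *: y)) K.

Definition K_seq_compact (R : realType) (Y : normedModType R)
    (K : set Y) (A : set Y) : Prop :=
  A !=set0 /\
  forall a : nat -> Y, (forall n, A (a n)) ->
    exists c : nat -> Y, (forall n, K (c n)) /\
      exists phi : nat -> nat, {homo phi : m n / (m < n)%N >-> (m < n)%N} /\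
        exists2 l, A l & (fun n => a (phi n) - c (phi n)) @ \oo --> l.

Definition K_closed (R : realType) (Y : normedModType R) (K : set Y) (A : set Y)
  : Prop := closed (mink_sum A K).

Definition frechet_subdiff (R : realType) (X Y : normedModType R)
    (K : set Y) (F : X -> set Y) (xbar : X) (T : X -> Y) : Prop :=
  forall eps : R, 0 < eps -> exists2 delta : R, 0 < delta &
    forall x, `|x - xbar| < delta ->
      mink_sum (F x) K `<=`
        mink_sum (set_transl (mink_sum (F xbar) K) (T (x - xbar)))
             (set_scale (eps * `|x - xbar|) (@cball1 R Y)).

(* Main.v *)
Require Import Defs.
From HB Require Import structures.
From mathcomp Require Import all_boot all_order all_algebra.
From mathcomp Require Import all_classical all_reals all_analysis.
From mathcomp Require Import lra.
Import Order.TTheory GRing.Theory Num.Theory.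
Import numFieldNormedType.Exports.
Local Open Scope classical_set_scope.
Local Open Scope ring_scope.
Lemma phi_ge (phi : nat -> nat) :
  {homo phi : m n / (m < n)%N >-> (m < n)%N} -> forall n, (n <= phi n)%N.
Proof.
move=> Hphi; elim=> [//|n IH]; apply: leq_ltn_trans IH (Hphi _ _ (ltnSn n)).
Qed.

Lemma closedB (R : realType) (Y : normedModType R) (K A : set Y) (z : Y) :
  pointed_closed_convex_cone K -> K_seq_compact K A ->
  (forall e : R, 0 < e -> exists a k, [/\ A a, K k & `|z - (a + k)| < e]) ->
  exists a k, [/\ A a, K k & z = a + k].
Proof.
move=> [_ _ Kadd _ Kcl] [_ Hseq] Happ.
have H1 : forall n : nat, exists p : Y * Y,
    [/\ A p.1, K p.2 & `|z - (p.1 + p.2)| < (n.+1%:R)^-1].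
  move=> n; have [a [k [Aa Kk Hn]]] := Happ _ (@divr_gt0 R 1 n.+1%:R ltr01 (ltr0Sn _ _)).
  by exists (a, k); split=> //; rewrite -[_^-1]mul1r.
have [f Hf] := choice H1.
have [c [Kc [phi [Hphi [l Al Hcv]]]]] := Hseq (fun n => (f n).1) (fun n => let: And3 x _ _ := Hf n in x).
have Hg : (fun n => (f (phi n)).1 + (f (phi n)).2) @ \oo --> z.
  apply/cvgrPdist_lt => e e0; near=> n.
  have [_ _ Hn] := Hf (phi n).
  apply: (lt_le_trans Hn).
  apply: (@le_trans _ _ (n.+1%:R^-1)).
    rewrite lef_pV2 ?posrE ?ltr0Sn // ler_nat ltnS; exact: phi_ge.
  apply/ltW; near: n; exact: (near_infty_natSinv_lt (PosNum e0)).
have E : (fun n => (f (phi n)).2 + c (phi n)) =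
   (fun n => ((f (phi n)).1 + (f (phi n)).2) - ((f (phi n)).1 - c (phi n))).
  by apply: funext => n; rewrite opprB [X in _ = X]addrC addrA subrK addrC.
have Hk : (fun n => (f (phi n)).2 + c (phi n)) @ \oo --> z - l.
  by rewrite E; apply: cvgB.
have Kzl : K (z - l).
  apply: (closed_cvg _ Kcl _ _ Hk); near=> n.
  case: (Hf (phi n)) => _ Kf _.
  exact: Kadd.
exists l, (z - l); split=> //; by rewrite addrC subrK.
Unshelve. all: by end_near.
Qed.

Lemma iter_approx (R : realType) (Y : normedModType R) (K A : set Y) (z a0 : Y)
   (r l : R) :
  pointed_closed_convex_cone K -> A a0 -> 0 < l -> l < 1 -> 0 <= r ->
  (forall a k, A a -> K k -> exists a' k' d,
     [/\ A a', K k', `|d| <= 1 & l *: z + (1-l) *: (a + k) = a' + k' + (l*r) *: d]) ->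
  forall n, exists a k, [/\ A a, K k & `|z - (a+k)| <= r + (1-l)^+n * `|z - a0|].
Proof.
move=> [K0 _ _ _ _] Aa0 l0 l1 r0 Hstep; elim=> [|n [a [k [Aa Kk Hn]]]].
  exists a0, 0; split=> //; rewrite addr0 expr0 mul1r lerDr //.
have [a' [k' [d [Aa' Kk' Hd E]]]] := Hstep a k Aa Kk.
exists a', k'; split=> //.
have -> : z - (a' + k') = (1 - l) *: (z - (a + k)) + (l * r) *: d.
  have -> : a' + k' = l *: z + (1-l) *: (a + k) - (l*r) *: d by rewrite E addrK.
  rewrite opprB [(1-l) *: (z - _)]scalerBr [(1-l) *: z]scalerBl scale1r opprD !addrA.
  by rewrite (addrAC z _ (- (l *: z))) (addrAC _ ((l*r) *: d)).
apply: le_trans; first exact: ler_normD.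
rewrite !normrZ (ger0_norm (_ : 0 <= 1 - l)) ?subr_ge0 ?(ltW l1) //.
rewrite (ger0_norm (ltW l0)) (ger0_norm r0) exprS.
have h1 : (1 - l) * `|z - (a + k)| <= (1 - l) * (r + (1 - l) ^+ n * `|z - a0|).
  by apply: ler_wpM2l; rewrite ?subr_ge0 ?(ltW l1).
have h2 : l * r * `|d| <= l * r.
  by rewrite -[X in _ <= X]mulr1; apply: ler_wpM2l; rewrite ?mulr_ge0 ?(ltW l0).
set Q := (1 - l) ^+ n * `|z - a0|.
rewrite -/Q in h1.
have -> : (1 - l) * (1 - l) ^+ n * `|z - a0| = (1-l) * Q by rewrite /Q mulrA.
rewrite mulrA; rewrite mulrDr in h1.
nra.
Qed.

Theorem mainTheorem4 (R : realType) (X Y : normedModType R) (K : set Y)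
    (F : X -> set Y) (xbar : X) :
  pointed_closed_convex_cone K ->
  (forall x, F x !=set0) ->
  upper_K_convex K F ->
  K_seq_compact K (F xbar) ->
  K_closed K (@cball1 R Y) ->
  forall T : {linear X -> Y}, continuous T ->
    (frechet_subdiff K F xbar T <->
     forall x, F x `<=` mink_sum (set_transl (F xbar) (T (x - xbar))) K).
Proof.
move=> Kc Fne Fconv Fcomp _ T _.
have Kc' := Kc; case: Kc' => [K0 Kscale Kadd _ _].
split; last first.
  move=> Hin eps eps0; exists 1 => // x _ w [f Ff [k Kk <-]].
  have [t [a Aa <-] [k' Kk' <-]] := Hin x f Ff.
  exists (((a + (k' + k)) + T (x - xbar))).
    exists (a + (k' + k)) => //; exists a => //; exists (k' + k) => //; exact: Kadd.
  exists ((eps * `|x - xbar|) *: 0).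
    by exists 0 => //; rewrite /cball1 /= normr0 ler01.
  by rewrite scaler0 addr0 -addrA (addrC (k' + k)) !addrA.
move=> Hfr x y Fy.
have [Ex|hne] := eqVneq x xbar.
  subst x.
  rewrite subrr linear0 /mink_sum /set_transl /=.
  exists (y + 0); first by exists y.
  by exists 0 => //; rewrite !addr0.
set h := x - xbar.
have hpos : 0 < `|h| by rewrite normr_gt0 subr_eq0.
set z := y - T h.
suff [a [k [Aa Kk Ez]]] : exists a k, [/\ F xbar a, K k & z = a + k].
  exists (a + T h); first by exists a.
  by exists k => //; rewrite addrAC -Ez /z subrK.
apply: closedB => //.
move=> e e0.
have [a0 Fa0] := Fne xbar.
set r := e / 2.
have r0 : 0 < r by rewrite divr_gt0.
have [delta d0 Hd] := Hfr (r / `|h|) (divr_gt0 r0 hpos).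
set l := Num.min (2^-1) (delta / (2 * `|h|)).
have l0 : 0 < l by rewrite lt_min invr_gt0 ltr0n /= divr_gt0 // mulr_gt0.
have ml : l <= 2^-1 by rewrite ge_min lexx.
have mr : l <= delta / (2 * `|h|) by rewrite ge_min lexx orbT.
have l1 : l < 1.
  by apply: (le_lt_trans ml); rewrite invf_lt1 ?ltr0n // ltr1n.
have lh : l * `|h| < delta.
  apply: (le_lt_trans (ler_wpM2r (ltW hpos) mr)).
  by rewrite invfM -!mulrA mulVf ?gt_eqF // mulr1 gtr_pMr // invf_lt1 ?ltr0n // ltr1n.
have Hstep : forall a k, F xbar a -> K k -> exists a' k' d,
    [/\ F xbar a', K k', `|d| <= 1 &
      l *: z + (1-l) *: (a + k) = a' + k' + (l*r) *: d].
  move=> a k Fa Kk.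
  set x' := l *: x + (1 - l) *: xbar.
  have Ex' : x' - xbar = l *: h.
    rewrite /x' /h scalerBr scalerBl scale1r.
    by rewrite addrA addrAC addrK.
  have Hm : mink_sum (set_scale l (F x)) (set_scale (1-l) (F xbar))
      (l *: y + (1-l) *: a).
    by exists (l *: y); [exists y | exists ((1-l) *: a); [exists a|]].
  have [f Ff [k1 Kk1 Efk]] := Fconv _ _ _ l0 l1 _ Hm.
  have Hw : mink_sum (F x') K (f + (k1 + (1-l) *: k)).
    exists f => //; exists (k1 + (1-l) *: k) => //; apply: Kadd => //.
    by apply: Kscale => //; rewrite subr_ge0 ltW.
  have Hx' : `|x' - xbar| < delta by rewrite Ex' normrZ gtr0_norm.
  have [w1 [b [a' Fa' [k' Kk' <-]] <-] [t [d Dd <-]] Ew] := Hd x' Hx' _ Hw.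
  exists a', k', d; split => //.
  have El : r / `|h| * `|x' - xbar| = l * r.
    by rewrite Ex' normrZ gtr0_norm // [l * _]mulrC mulrA mulrAC divfK ?gt_eqF.
  rewrite El Ex' linearZ /= in Ew.
  have E2 : a' + k' + (l*r) *: d = f + (k1 + (1-l) *: k) - l *: T h.
    by rewrite -Ew [in RHS]addrAC addrK.
  rewrite E2 addrA Efk /z scalerBr scalerDr !addrA.
  by rewrite (addrAC (l *: y)) (addrAC _ (- (l *: T h))).
have Hit := @iter_approx R Y K (F xbar) z a0 r l Kc Fa0 l0 l1 (ltW r0) Hstep.
have Hc : (fun n => (1-l)^+n * `|z - a0|) @ \oo --> 0.
  rewrite -(mul0r `|z - a0|); apply: cvgM; last exact: cvg_cst.
  apply: cvg_expr; rewrite ger0_norm ?subr_ge0 ?(ltW l1) //.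
  by rewrite ltrBlDr ltrDl.
have [N _ HN] := (cvgrPdist_lt _ _).1 Hc r r0.
have := HN N (leqnn N); rewrite sub0r normrN => HNr.
have [a [k [Fa Kk Ha]]] := Hit N.
exists a, k; split => //.
apply: (le_lt_trans Ha).
have : r + r = e by rewrite /r -splitr.
have := ler_norm ((1 - l) ^+ N * `|z - a0|).
lra.
Qed.
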